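(* There exists an infinite family of tries $\mathcal T$ with $n$ nodes (for arbitrarily large $n$) for which $r=\Theta(n\mathcal H_0(\mathcal T))=\Theta(n)$, where $r$ is the number of XBWT runs of $\mathcal T$.
   Context: A trie over a finite totally ordered alphabet $\Sigma$ is a rooted ordered tree with edges labeled by symbols of $\Sigma$ such that edges leaving the same node have distinct labels and siblings are ordered by their incoming labels. $n_c$ is the number of edges labeled $c$ and $out(u)$ the set of labels of edges leaving $u$. Logs base 2, $0\log(x/0)=0$. $\mathcal H_0(\mathcal T)=\sum_{c\in\Sigma}\left[\frac{n_c}{n}\log\frac{n}{n_c}+\frac{n-n_c}{n}\log\frac{n}{n-n_c}\right]$. Let $u_1,\dots,u_n$ be the nodes sorted co-lexicographically (right-to-left comparison, $\epsilon$ smallest) by the root-to-node path label. An index $i\in[n]$ is a $c$-run break if $c\in out(u_i)$ and either $i=n$ or $c\notin out(u_{i+1})$; $r=\sum_{c\in\Sigma}r_c$ where $r_c$ is the number of $c$-run breaks. *)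

(* Defs.v *)
From Stdlib Require Import Reals.
From mathcomp Require Import all_boot.

Set Implicit Arguments.
Unset Strict Implicit.
Unset Printing Implicit Defensive.

(* A trie over the totally ordered alphabet 'I_sigma (ordered by value) is
   represented by the list of its nodes, each node identified with its
   root-to-node path label (a word).
   Edges correspond to non-root nodes: the edge entering w = rcons u c has
   label c and leaves u. *)
Definition word (sigma : nat) := seq 'I_sigma.

Definition is_trie sigma (T : seq (word sigma)) : Prop :=
  [::] \in T /\ uniq T /\ (forall (u : word sigma) c, rcons u c \in T -> u \in T).

Definition nnodes sigma (T : seq (word sigma)) : nat := size T.

Definition nlab sigma (T : seq (word sigma)) (c : 'I_sigma) : nat :=
  count (fun w : word sigma => (w != [::]) && (last c w == c)) T.

Definition in_out sigma (T : seq (word sigma)) (u : word sigma) (c : 'I_sigma) : bool :=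
  rcons u c \in T.

Fixpoint lex_le (s t : seq nat) : bool :=
  match s, t with
  | [::], _ => true
  | _ :: _, [::] => false
  | a :: s', b :: t' => (a < b) || ((a == b) && lex_le s' t')
  end.

Definition colex_le sigma (u v : word sigma) : bool :=
  lex_le (map val (rev u)) (map val (rev v)).

Definition colex_sorted sigma (T : seq (word sigma)) : seq (word sigma) :=
  sort (@colex_le sigma) T.

(* number of c-run breaks (0-based index i here corresponds to i+1) *)
Definition runs_c sigma (T : seq (word sigma)) (c : 'I_sigma) : nat :=
  let s := colex_sorted T in
  \sum_(i < size s)
     [&& in_out T (nth [::] s i) c
       & (i.+1 == size s) || ~~ in_out T (nth [::] s i.+1) c].

Definition runs sigma (T : seq (word sigma)) : nat :=
  \sum_(c < sigma) runs_c T c.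

Local Open Scope R_scope.

Definition log2 (x : R) : R := ln x / ln 2.

Definition xlogterm (n k : nat) : R :=
  if k == 0%N then 0 else INR k / INR n * log2 (INR n / INR k).

Definition H0 sigma (T : seq (word sigma)) : R :=
  let n := nnodes T in
  foldr Rplus 0
    (map (fun c => xlogterm n (nlab T c) + xlogterm n (n - nlab T c)%N)
         (enum 'I_sigma)).

(* Main.v *)
Require Import Defs.
From Stdlib Require Import Reals Lra.
From mathcomp Require Import all_boot zify.

Lemma lex_le_trans3 x y z : lex_le x y -> lex_le y z -> lex_le x z.
Proof.
elim: x y z => [|a x IH] [|b y] [|c z] //=.
move=> /orP[ab|/andP[/eqP-> xy]] /orP[bc|/andP[/eqP<- yz]].
- by rewrite (ltn_trans ab bc).
- by rewrite ab.
- by rewrite bc.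
- by rewrite eqxx (IH _ _ xy yz) orbT.
Qed.

Definition o0 : 'I_2 := @Ordinal 2 0 isT.
Definition o1 : 'I_2 := @Ordinal 2 1 isT.

Fixpoint L (k : nat) : seq (word 2) :=
  match k with
  | 0 => [:: [::]]
  | k'.+1 => [::] :: (map (cons o0) (L k') ++ map (cons o1) (L k'))
  end.

Fixpoint rb (P : word 2 -> bool) (s : seq (word 2)) : nat :=
  match s with
  | [::] => 0
  | x :: s' => (P x && (if s' is y :: _ then ~~ P y else true)) + rb P s'
  end.

Lemma brkE (P : word 2 -> bool) s :
  \sum_(i < size s) [&& P (nth [::] s i) & (i.+1 == size s) || ~~ P (nth [::] s i.+1)]
  = rb P s.
Proof.
elim: s => [|x s IH]; first by rewrite big_ord0.
rewrite /= big_ord_recl /= -IH; congr (_ + _).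
  by case: s {IH}.
Qed.

Lemma rb_map P f s : rb P (map f s) = rb (fun x => P (f x)) s.
Proof. by elim: s => //= x s ->; case: s. Qed.

Lemma rb_ext P Q s : P =1 Q -> rb P s = rb Q s.
Proof. by move=> e; elim: s => //= x s ->; case: s => [|y s]; rewrite /= ?e. Qed.

Lemma rb_cat P x s1 s2 : ~~ P (last x s1) ->
  rb P ((x :: s1) ++ s2) = rb P (x :: s1) + rb P s2.
Proof.
elim: s1 x => [|y s1 IH] x /=.
  by move/negbTE=> ->; rewrite addn0.
by move=> H; have := IH y H; rewrite /= => ->; rewrite addnA.
Qed.

Lemma ord2 (a : 'I_2) : (a == o0) || (a == o1).
Proof. by case: a => [[|[|]]]. Qed.

Lemma L_head k : L k = [::] :: behead (L k).
Proof. by case: k. Qed.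

Lemma last_L k : last [::] (L k) = nseq k o1.
Proof.
elim: k => //= k IH.
rewrite last_cat (L_head k) /= last_map -IH.
by rewrite [in RHS](L_head k).
Qed.

Lemma size_L k : size (L k.+1) = (size (L k) + size (L k)).+1.
Proof. by rewrite /= size_cat !size_map. Qed.

Lemma size_L_ge k : k < size (L k).
Proof. elim: k => // k IH; rewrite size_L; by rewrite ltnS; apply: leq_trans IH (leq_addr _ _). Qed.

Lemma mem_map_cons (a b : 'I_2) (x : word 2) s :
  (a :: x \in map (cons b) s) = (a == b) && (x \in s).
Proof.
apply/mapP/andP => [[y ys [-> ->]]|[/eqP -> xs]]; first by rewrite eqxx.
by exists x.
Qed.

Lemma o01 : (o0 == o1) = false.
Proof. by apply/eqP => /(congr1 val). Qed.
Lemma o10 : (o1 == o0) = false.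
Proof. by apply/eqP => /(congr1 val). Qed.

Lemma mem_L k x : (x \in L k) = (size x <= k).
Proof.
elim: k x => [|k IH] [|a x] //.
rewrite /= in_cons /= mem_cat !mem_map_cons IH.
by case/orP: (ord2 a) => /eqP->; rewrite eqxx ?o01 ?o10 ?orbF.
Qed.

Lemma uniq_L k : uniq (L k).
Proof.
elim: k => //= k IH.
rewrite cat_uniq !map_inj_uniq //; try by move=> ? ? [].
rewrite mem_cat IH /= andbT; apply/andP; split.
  by apply/norP; split; apply/negP => /mapP[].
apply/hasP => -[[|a y]]; first by move=> /mapP[].
by rewrite /= !mem_map_cons => /andP[/eqP-> _] /andP[]; rewrite o10.
Qed.

Definition lexw (x y : word 2) := lex_le (map val x) (map val y).

Lemma lexw_trans : transitive lexw.
Proof. move=> y x z; exact: lex_le_trans3. Qed.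

Lemma sorted_L k : sorted lexw (L k).
Proof.
rewrite sorted_pairwise; last exact: lexw_trans.
elim: k => //= k IH.
rewrite pairwise_cat !pairwise_map.
apply/andP; split; first by apply/allP.
apply/and3P; split.
- by apply/allrelP => x y /mapP[x' _ ->] /mapP[y' _ ->].
- apply: sub_pairwise IH => x y; by rewrite /relpre /lexw /=.
- apply: sub_pairwise IH => x y; by rewrite /relpre /lexw /=.
Qed.

Definition Fam (m : nat) : seq (word 2) := map rev (L m.+1).

Lemma mem_F m w : (w \in Fam m) = (size w <= m.+1).
Proof.
by rewrite -{1}(revK w) (mem_map (can_inj (@revK _))) mem_L size_rev.
Qed.

Lemma colex_F m : colex_sorted (Fam m) = Fam m.
Proof.
apply: sorted_sort.
  by move=> y x z; rewrite /colex_le; exact: lex_le_trans3.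
rewrite /Fam sorted_map; apply: sub_sorted (sorted_L _) => x y.
by rewrite /relpre /colex_le /= (revK x) (revK y).
Qed.

Lemma is_trie_F m : is_trie (Fam m).
Proof.
split; first by rewrite mem_F.
split; first by rewrite map_inj_uniq ?uniq_L //; exact: (can_inj (@revK _)).
by move=> u c; rewrite !mem_F size_rcons => /ltnW.
Qed.

Lemma rb_cons2 P x y s : rb P (x :: y :: s) = (P x && ~~ P y) + rb P (y :: s).
Proof. by []. Qed.

Lemma rb_step k : rb (fun x => size x < k.+2) (L k.+2)
  = 2 * rb (fun x => size x < k.+1) (L k.+1).
Proof.
have E := L_head k.+1. set R := behead (L k.+1) in E.
have lastR : last [::] R = nseq k.+1 o1 by rewrite -last_L E.
have -> : L k.+2 = [::] :: (map (cons o0) (L k.+1) ++ map (cons o1) (L k.+1)) by [].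
rewrite E !map_cons cat_cons rb_cons2.
have -> : (size ([::] : word 2) < k.+2) && ~~ (size [:: o0] < k.+2) = false by [].
rewrite add0n -cat_cons rb_cat; last first.
  by rewrite (last_map (cons o0) _ [::]) lastR /= size_nseq ltnn.
rewrite -(map_cons (cons o0) [::] R) -(map_cons (cons o1) [::] R) !rb_map -E mul2n -addnn.
by congr (_ + _); apply: rb_ext.
Qed.

Lemma b_val k : 2 * rb (fun x => size x < k.+1) (L k.+1) = (size (L k)).+1.
Proof.
elim: k => [|k IH]; first by [].
rewrite rb_step size_L; lia.
Qed.

Lemma runs_F m : runs (Fam m) = (size (L m)).+1.
Proof.
have H c : runs_c (Fam m) c = rb (fun x => size x < m.+1) (L m.+1).
  rewrite /runs_c (brkE (fun u => in_out (Fam m) u c)) colex_F.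
  rewrite (@rb_ext _ (fun u => size u < m.+1)); last first.
    by move=> u; rewrite /in_out mem_F size_rcons.
  rewrite /Fam rb_map; apply: rb_ext => x; by rewrite size_rev.
rewrite /runs big_ord_recr big_ord_recr big_ord0 /= !H -b_val; lia.
Qed.

Lemma nlab_F m c : nlab (Fam m) c = size (L m).
Proof.
have K (d : 'I_2) : count (fun x => (rev (d::x) != [::]) && (last c (rev (d::x)) == c)) (L m)
    = (d == c) * size (L m).
  rewrite (@eq_count _ _ (fun _ => d == c)); last first.
    by move=> x; rewrite rev_cons last_rcons -size_eq0 size_rcons.
  by elim: (L m) => [|x s IH] /=; [rewrite muln0 | rewrite IH; case: (d == c)].
rewrite /nlab /Fam count_map /= count_cat !count_map.
rewrite /preim /= K K.
by case/orP: (ord2 c) => /eqP->; rewrite eqxx ?o01 ?o10 /=; lia.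
Qed.

Lemma nnodes_F m : nnodes (Fam m) = (size (L m) + size (L m)).+1.
Proof. by rewrite /nnodes /Fam size_map size_L. Qed.
Local Open Scope R_scope.

Lemma foldr_const (v : R) (s : seq 'I_2) :
  foldr Rplus 0 (map (fun _ => v) s) = INR (size s) * v.
Proof. elim: s => [|x s IH]; first by rewrite /=; ring. rewrite [in LHS]/= IH. change (size (x::s)) with (S (size s)); rewrite S_INR; ring. Qed.

Lemma H0_F m : H0 (Fam m) =
  2 * (xlogterm (size (L m) + size (L m)).+1 (size (L m))
      + xlogterm (size (L m) + size (L m)).+1 (size (L m)).+1).
Proof.
rewrite /H0 nnodes_F.
rewrite (@eq_map _ _ _ (fun _ => xlogterm (size (L m) + size (L m)).+1 (size (L m))
      + xlogterm (size (L m) + size (L m)).+1 (size (L m)).+1)); last first.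
  move=> c; rewrite nlab_F.
  by have -> : ((size (L m) + size (L m)).+1 - size (L m))%nat = (size (L m)).+1 by lia.
rewrite foldr_const size_enum_ord /=; ring.
Qed.

Lemma ln_le' x y : 0 < x -> x <= y -> ln x <= ln y.
Proof.
move=> hx [hxy|->]; last by apply Rle_refl.
by apply Rlt_le, ln_increasing.
Qed.

Lemma ln2_pos : 0 < ln 2.
Proof. have := ln_lt_2; lra. Qed.

Lemma log2_ge1 x : 2 <= x -> 1 <= log2 x.
Proof.
move=> hx; rewrite /log2.
have h2 := ln2_pos. have := ln_le' 2 x ltac:(lra) hx => hl.
have hi : 0 < / ln 2 by apply Rinv_0_lt_compat.
have e : ln 2 * / ln 2 = 1 by field; lra.
rewrite /Rdiv; nra.
Qed.

Lemma log2_ge0 x : 1 <= x -> 0 <= log2 x.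
Proof.
move=> hx; rewrite /log2.
have h2 := ln2_pos. have := ln_le' 1 x ltac:(lra) hx; rewrite ln_1 => hl.
have hi : 0 < / ln 2 by apply Rinv_0_lt_compat.
rewrite /Rdiv; nra.
Qed.

Lemma log2_le2 x : 0 < x -> x <= 4 -> log2 x <= 2.
Proof.
move=> h0 hx; rewrite /log2.
have h2 := ln2_pos. have := ln_le' x 4 h0 hx => hl.
have e4 : ln 4 = 2 * ln 2.
  have -> : 4 = 2 * 2 by lra. rewrite ln_mult; lra.
have hi : 0 < / ln 2 by apply Rinv_0_lt_compat.
have e : ln 2 * / ln 2 = 1 by field; lra.
rewrite /Rdiv; nra.
Qed.

Lemma h_bounds (a : nat) : (1 <= a)%nat ->
  1/3 <= xlogterm (a + a).+1 a + xlogterm (a + a).+1 a.+1 <= 4.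
Proof.
move=> ha.
have hA : 1 <= INR a by apply (le_INR 1); apply/leP.
rewrite /xlogterm.
have -> : (a == 0%nat) = false by lia.
rewrite !S_INR plus_INR /=.
set A := INR a.
have hA1 : 1 <= A := hA.
have e1 : (2 * A + 1) / A = 2 + / A by field; lra.
have hiA : 0 < / A by apply Rinv_0_lt_compat; lra.
have eA : A * / A = 1 by field; lra.
have hiA1 : / A <= 1 by nra.
have e1' : (A + A + 1) / A = 2 + / A by rewrite -e1; f_equal; ring.
have l1 : 1 <= log2 ((A + A + 1) / A) by apply log2_ge1; rewrite e1'; lra.
have u1 : log2 ((A + A + 1) / A) <= 2 by apply log2_le2; rewrite e1'; lra.
have hiB : 0 < / (A + A + 1) by apply Rinv_0_lt_compat; lra.
have eB : (A + A + 1) * / (A + A + 1) = 1 by field; lra.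
have q1 : 1/3 <= A / (A + A + 1) by rewrite /Rdiv; nra.
have q1' : A / (A + A + 1) <= 1 by rewrite /Rdiv; nra.
have q2 : 0 <= (A + 1) / (A + A + 1) by rewrite /Rdiv; nra.
have q2' : (A + 1) / (A + A + 1) <= 1 by rewrite /Rdiv; nra.
have hiC : 0 < / (A + 1) by apply Rinv_0_lt_compat; lra.
have eC : (A + 1) * / (A + 1) = 1 by field; lra.
have r2 : 1 <= (A + A + 1) / (A + 1) by rewrite /Rdiv; nra.
have r2' : (A + A + 1) / (A + 1) <= 4 by rewrite /Rdiv; nra.
have l2 := log2_ge0 _ r2.
have u2 := log2_le2 ((A + A + 1) / (A + 1)) ltac:(lra) r2'.
split; nra.
Qed.


Theorem proposition4 :
  exists (sigma : nat) (F : nat -> seq (word sigma)) (C : R),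
    Rlt 0 C /\
    forall m : nat,
      is_trie (F m) /\ (m <= nnodes (F m))%N /\
      Rle (INR (runs (F m))) (Rmult C (Rmult (INR (nnodes (F m))) (H0 (F m)))) /\
      Rle (Rmult (INR (nnodes (F m))) (H0 (F m))) (Rmult C (INR (runs (F m)))) /\
      Rle (INR (runs (F m))) (Rmult C (INR (nnodes (F m)))) /\
      Rle (INR (nnodes (F m))) (Rmult C (INR (runs (F m)))).
Proof.
exists 2%N, Fam, 16; split; first lra.
move=> m.
have ha : (1 <= size (L m))%N by have := size_L_ge m; lia.
split; first exact: is_trie_F.
split; first by rewrite nnodes_F; have := size_L_ge m; lia.
rewrite H0_F runs_F nnodes_F.
have [hlo hhi] := h_bounds (size (L m)) ha.
set h := (xlogterm _ _ + xlogterm _ _) in hlo hhi *.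
have hA : (1 <= INR (size (L m))) by apply (le_INR 1); apply/leP.
rewrite !S_INR plus_INR.
set A := INR (size (L m)) in hA *.
split; first nra.
split; first nra.
split; lra.
Qed.
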